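(* Let $D\ge1$, let $\sigma_1^2,\sigma_2^2>0$, $c'>0$, and for $k=1,\dots,D$ let $\alpha_k>0$, $\beta_k>0$, $q_k>0$ be fixed. Consider the problem in the variables $d_1,\dots,d_D\ge0$ and $0\le\varepsilon\le1$: $$\max\;\tilde f(\varepsilon,\{d_k\})=\frac{1-\varepsilon}{2}\sum_{k=1}^D\log_2\frac{\left(1+\frac{\alpha_k}{\sigma_1^2}q_k\right)\left(1+\frac{\beta_k}{\sigma_2^2}d_k\right)}{1+\frac{\alpha_k}{\sigma_1^2}q_k+\frac{\beta_k}{\sigma_2^2}d_k}\quad\text{s.t.}\quad \tilde g(\varepsilon,\{d_k\})=\varepsilon c'-\frac{1-\varepsilon}{2}\sum_{k=1}^D d_k\ge0.$$ For $\mu_1>0$ define $$d_k(\mu_1)=\frac{\sigma_2^2}{2\beta_k}\left(\sqrt{\left(\frac{q_k\alpha_k}{\sigma_1^2}\right)^2+\frac{4q_k\alpha_k\beta_k\mu_1}{\sigma_1^2\sigma_2^2\ln2}}-\frac{q_k\alpha_k}{\sigma_1^2}-2\right)^+$$ and $$\tilde l(\mu_1)=-\frac12\sum_{k=1}^D\log_2\frac{\left(1+\frac{\alpha_k}{\sigma_1^2}q_k\right)\left(1+\frac{\beta_k}{\sigma_2^2}d_k(\mu_1)\right)}{1+\frac{\alpha_k}{\sigma_1^2}q_k+\frac{\beta_k}{\sigma_2^2}d_k(\mu_1)}+\frac1{\mu_1}\left[c'+\frac12\sum_{k=1}^D d_k(\mu_1)\right].$$ Then there exists $\mu_1^*>0$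 with $\tilde l(\mu_1^* )=0$, and for any such $\mu_1^*$ the point $d_k^*=d_k(\mu_1^* )$, $$\varepsilon^*=\frac{\sum_{k=1}^D d_k^*}{2c'+\sum_{k=1}^D d_k^*},$$ is feasible with $\tilde g(\varepsilon^*,\{d_k^*\})=0$ and, with multiplier $\nu_1=1/\mu_1^*$ on $\tilde g\ge0$ and suitable multipliers $\lambda_k\ge0$ on $d_k\ge0$, satisfies the Karush–Kuhn–Tucker conditions of this problem.
   Context: This is the subproblem, with the source power allocation $q_k$ fixed, of the joint source/relay/TS-ratio design for an energy-harvesting MIMO relay: $\alpha_k,\beta_k$ are squared singular values of the source–relay and relay–destination channels, $d_k$ are transformed relay power variables, $\varepsilon$ is the time-switching ratio, and $c'=\eta(g_1P_0+\sigma_1^2D)>0$ is the harvested-energy constant ($\eta\in(0,1]$ conversion efficiency, $g_1$ largest squared singular value of the energy-phase channel, $P_0$ energy-phase transmit power). *)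

(* Defs.v *)
From Stdlib Require Export Reals Lra.
Open Scope R_scope.

(* Finite sum over indices 0..n-1 (index k = 0..D-1 stands for k = 1..D). *)
Fixpoint rsum (n : nat) (f : nat -> R) : R :=
  match n with
  | O => 0
  | S m => rsum m f + f m
  end.

Definition log2 (x : R) : R := ln x / ln 2.

Definition pos_part (x : R) : R := Rmax 0 x.

Definition upd (d : nat -> R) (k : nat) (x : R) : nat -> R :=
  fun j => if Nat.eqb j k then x else d j.

(* s1 = sigma_1^2, s2 = sigma_2^2 *)
Definition term (s1 s2 : R) (alpha beta q : nat -> R) (d : nat -> R) (k : nat) : R :=
  log2 (((1 + alpha k / s1 * q k) * (1 + beta k / s2 * d k))
        / (1 + alpha k / s1 * q k + beta k / s2 * d k)).

Definition ftil (D : nat) (s1 s2 : R) (alpha beta q : nat -> R)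
  (eps : R) (d : nat -> R) : R :=
  (1 - eps) / 2 * rsum D (term s1 s2 alpha beta q d).

Definition gtil (D : nat) (c : R) (eps : R) (d : nat -> R) : R :=
  eps * c - (1 - eps) / 2 * rsum D d.

Definition dmu (s1 s2 : R) (alpha beta q : nat -> R) (mu : R) (k : nat) : R :=
  s2 / (2 * beta k) *
  pos_part (sqrt ((q k * alpha k / s1) ^ 2
                  + 4 * q k * alpha k * beta k * mu / (s1 * s2 * ln 2))
            - q k * alpha k / s1 - 2).

Definition ltil (D : nat) (s1 s2 c : R) (alpha beta q : nat -> R) (mu : R) : R :=
  - (1 / 2) * rsum D (term s1 s2 alpha beta q (dmu s1 s2 alpha beta q mu))
  + 1 / mu * (c + 1 / 2 * rsum D (dmu s1 s2 alpha beta q mu)).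

Definition lagr (D : nat) (s1 s2 c : R) (alpha beta q : nat -> R)
  (nu : R) (lam : nat -> R) (eps : R) (d : nat -> R) : R :=
  ftil D s1 s2 alpha beta q eps d + nu * gtil D c eps d
  + rsum D (fun k => lam k * d k).

(* Main.v *)
Require Import Defs.
From Stdlib Require Import Reals Lra Lia Ranalysis5.
From Coquelicot Require Import Coquelicot.
Open Scope R_scope.

Lemma rsum_ext n f g : (forall j, (j < n)%nat -> f j = g j) -> rsum n f = rsum n g.
Proof. induction n; simpl; intros H; auto. rewrite IHn by (intros; apply H; lia). rewrite H by lia. auto. Qed.

Lemma rsum_le n f g : (forall j, (j < n)%nat -> f j <= g j) -> rsum n f <= rsum n g.
Proof. induction n; simpl; intros H; [lra|]. assert (rsum n f <= rsum n g) by (apply IHn; intros; apply H; lia).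
  specialize (H n ltac:(lia)). lra. Qed.

Lemma rsum_nonneg n f : (forall j, (j < n)%nat -> 0 <= f j) -> 0 <= rsum n f.
Proof. intros H. replace 0 with (rsum n (fun _ => 0)). apply rsum_le; auto.
  induction n; simpl; auto. rewrite IHn by (intros; apply H; lia). lra. Qed.

Lemma rsum_ge_first n f : (1 <= n)%nat -> (forall j, (j < n)%nat -> 0 <= f j) -> f O <= rsum n f.
Proof. induction n; intros Hn H; [lia|]. simpl. destruct n.
  - simpl. lra.
  - assert (f O <= rsum (S n) f) by (apply IHn; [lia| intros; apply H; lia]).
    specialize (H (S n) ltac:(lia)). lra. Qed.

Lemma rsum_zero n f : (forall j, (j < n)%nat -> f j = 0) -> rsum n f = 0.
Proof. intros H. induction n; simpl; auto. rewrite IHn by (intros; apply H; lia). rewrite H by lia. lra. Qed.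

Lemma rsum_delta n k g : (k < n)%nat -> rsum n (fun j => if Nat.eqb j k then g else 0) = g.
Proof. induction n; intros Hk; [lia|]. simpl. destruct (Nat.eq_dec k n).
  - subst. rewrite Nat.eqb_refl. rewrite rsum_zero; [lra|]. intros j Hj.
    destruct (Nat.eqb_spec j n); [lia|auto].
  - rewrite IHn by lia. destruct (Nat.eqb_spec n k); [lia|lra]. Qed.

Lemma rsum_deriv n (F : R -> nat -> R) (G : nat -> R) x0 :
  (forall j, (j < n)%nat -> derivable_pt_lim (fun x => F x j) x0 (G j)) ->
  derivable_pt_lim (fun x => rsum n (F x)) x0 (rsum n G).
Proof. induction n; intros H; simpl.
  - apply derivable_pt_lim_const.
  - apply (derivable_pt_lim_plus (fun x => rsum n (F x)) (fun x => F x n)).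
    + apply IHn; intros; apply H; lia.
    + apply H; lia. Qed.

Lemma rsum_cont n (F : R -> nat -> R) x0 :
  (forall j, (j < n)%nat -> continuous (fun x => F x j) x0) ->
  continuous (fun x => rsum n (F x)) x0.
Proof. induction n; intros H; simpl.
  - apply continuous_const.
  - apply (continuous_plus (fun x => rsum n (F x)) (fun x => F x n)).
    + apply IHn; intros; apply H; lia.
    + apply H; lia. Qed.
Lemma ln2_pos : 0 < ln 2.
Proof. rewrite <- ln_1. apply ln_increasing; lra. Qed.

Lemma core a Y : 0 < a -> 0 <= Y ->
  let u := pos_part (sqrt (a^2+4*Y) - a - 2)/2 in
  0 <= u /\ (0 < u -> (1+u)*(1+a+u) = Y) /\ (u = 0 -> Y <= 1+a).
Proof.
  intros Ha HY u.
  assert (Hs0 : 0 <= sqrt (a^2+4*Y)) by apply sqrt_pos.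
  assert (Hs2 : sqrt (a^2+4*Y) * sqrt (a^2+4*Y) = a^2+4*Y) by (apply sqrt_sqrt; nra).
  unfold u, pos_part. destruct (Rle_dec (sqrt (a ^ 2 + 4 * Y) - a - 2) 0).
  - rewrite Rmax_left by lra. split; [lra|]. split; [lra|]. intros _. nra.
  - rewrite Rmax_right by lra. split; [lra|]. split; [intros _; nra|]. intros; lra.
Qed.

Lemma core2 a Y : 0 < a -> 0 <= Y ->
  let u := pos_part (sqrt (a^2+4*Y) - a - 2)/2 in
  u * u <= Y /\ (2*(a+1)*(a+2) <= Y -> 1 + a <= u).
Proof.
  intros Ha HY u. destruct (core a Y Ha HY) as [H0 [H1 H2]]. fold u in H0, H1, H2.
  destruct (Rle_lt_or_eq_dec 0 u H0) as [Hp|He].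
  - specialize (H1 Hp). split; [nra|]. intros HH. nra.
  - specialize (H2 (eq_sym He)). rewrite <- He. split; [lra|]. intros; nra.
Qed.

Definition hu (A u : R) := log2 (((1 + A) * (1 + u)) / (1 + A + u)).

Lemma hu_bounds A u : 0 < A -> 0 <= u -> 0 <= hu A u <= log2 (1 + A).
Proof.
  intros HA Hu. pose proof ln2_pos. unfold hu, log2. split.
  - apply Rdiv_le_0_compat; auto. rewrite <- ln_1. apply ln_le; [lra|].
    apply Rcomplements.Rle_div_r; nra.
  - apply Rmult_le_compat_r; [left; apply Rinv_0_lt_compat; auto|].
    apply ln_le. apply Rdiv_lt_0_compat; nra.
    apply Rcomplements.Rle_div_l; nra.
Qed.

Lemma hu_big A u : 0 < A -> 1 + A <= u -> log2 (1 + A/2) <= hu A u.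
Proof.
  intros HA Hu. pose proof ln2_pos. unfold hu, log2.
  apply Rmult_le_compat_r; [left; apply Rinv_0_lt_compat; auto|].
  apply ln_le; [lra|]. apply Rcomplements.Rle_div_r; nra.
Qed.

Lemma log2_pos x : 1 < x -> 0 < log2 x.
Proof. intros. pose proof ln2_pos. unfold log2. apply Rdiv_lt_0_compat; auto.
  rewrite <- ln_1; apply ln_increasing; lra. Qed.

Lemma dmu_link s1 s2 alpha beta q mu k :
  0 < s1 -> 0 < s2 -> 0 < alpha k -> 0 < beta k -> 0 < q k ->
  beta k / s2 * dmu s1 s2 alpha beta q mu k =
  pos_part (sqrt ((alpha k / s1 * q k)^2 + 4 * ((alpha k / s1 * q k) * (beta k / s2) * mu / ln 2))
     - (alpha k / s1 * q k) - 2) / 2.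
Proof.
  intros. pose proof ln2_pos. unfold dmu.
  replace ((alpha k / s1 * q k)^2 + 4 * ((alpha k / s1 * q k) * (beta k / s2) * mu / ln 2))
    with ((q k * alpha k / s1) ^ 2 + 4 * q k * alpha k * beta k * mu / (s1 * s2 * ln 2)) by (field; lra).
  replace (alpha k / s1 * q k) with (q k * alpha k / s1) by (field; lra).
  field. lra.
Qed.
Lemma cR_plus (f g : R -> R) (x : R) : continuous f x -> continuous g x -> continuous (fun y => f y + g y) x.
Proof. intros. apply (continuous_plus (V:=R_NormedModule) f g x); auto. Qed.
Lemma cR_mult (f g : R -> R) (x : R) : continuous f x -> continuous g x -> continuous (fun y => f y * g y) x.
Proof. intros. apply (continuous_mult (K:=R_AbsRing) f g x); auto. Qed.

Lemma exd_cont (f : R -> R) x : ex_derive f x -> continuous f x.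
Proof. intros. apply (ex_derive_continuous (K:=R_AbsRing) (V:=R_NormedModule)); auto. Qed.

Lemma pos_part_cont x : continuous pos_part x.
Proof.
  apply continuous_ext with (f := fun y => (y + Rabs y) * / 2).
  - intros y. unfold pos_part, Rmax. destruct (Rle_dec 0 y).
    + rewrite Rabs_right by lra. lra.
    + rewrite Rabs_left by lra. lra.
  - apply cR_mult; [|apply continuous_const]. apply cR_plus; [apply continuous_id|apply continuous_Rabs].
Qed.

Lemma dmu_cont s1 s2 alpha beta q k mu : 0 < s1 -> 0 < s2 -> 0 < alpha k -> 0 < beta k -> 0 < q k ->
  0 < mu -> continuous (fun m => dmu s1 s2 alpha beta q m k) mu.
Proof.
  intros. pose proof ln2_pos. unfold dmu.
  apply cR_mult; [apply continuous_const|].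
  apply (continuous_comp (fun m => sqrt ((q k * alpha k / s1) ^ 2 + 4 * q k * alpha k * beta k * m / (s1 * s2 * ln 2)) -
   q k * alpha k / s1 - 2) pos_part); [|apply pos_part_cont].
  apply exd_cont. auto_derive.
  assert (0 < (q k * alpha k / s1)) by (apply Rdiv_lt_0_compat; nra).
  assert (0 <= 4 * q k * alpha k * beta k * mu / (s1 * s2 * ln 2)).
  { left. apply Rdiv_lt_0_compat. repeat apply Rmult_lt_0_compat; lra. repeat apply Rmult_lt_0_compat; lra. }
  nra.
Qed.

Lemma dmu_nonneg s1 s2 alpha beta q k mu : 0 < s2 -> 0 < beta k -> 0 <= dmu s1 s2 alpha beta q mu k.
Proof. intros. unfold dmu, pos_part. apply Rmult_le_pos. left; apply Rdiv_lt_0_compat; lra.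
  apply Rmax_l. Qed.

Lemma ltil_cont D s1 s2 c alpha beta q mu : 0 < s1 -> 0 < s2 ->
  (forall k, (k < D)%nat -> 0 < alpha k /\ 0 < beta k /\ 0 < q k) ->
  0 < mu -> continuous (ltil D s1 s2 c alpha beta q) mu.
Proof.
  intros H1 H2 Hk Hmu. pose proof ln2_pos. unfold ltil.
  apply cR_plus.
  - apply cR_mult; [apply continuous_const|].
    apply (rsum_cont D (fun m => term s1 s2 alpha beta q (dmu s1 s2 alpha beta q m))).
    intros j Hj. destruct (Hk j Hj) as [Ha [Hb Hq]]. unfold term.
    apply (continuous_comp (fun m => dmu s1 s2 alpha beta q m j)
       (fun x => log2 ((1 + alpha j / s1 * q j) * (1 + beta j / s2 * x) / (1 + alpha j / s1 * q j + beta j / s2 * x)))).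
    + apply dmu_cont; auto.
    + apply exd_cont. pose proof (dmu_nonneg s1 s2 alpha beta q j mu H2 Hb).
      assert (0 < alpha j / s1 * q j) by (apply Rmult_lt_0_compat; [apply Rdiv_lt_0_compat|]; lra).
      assert (0 <= beta j / s2 * dmu s1 s2 alpha beta q mu j) by (apply Rmult_le_pos; [left; apply Rdiv_lt_0_compat|]; lra).
      unfold log2. auto_derive. repeat split; try lra. apply Rdiv_lt_0_compat; nra.
  - apply cR_mult.
    + apply exd_cont. auto_derive. lra.
    + apply cR_plus; [apply continuous_const|]. apply cR_mult; [apply continuous_const|].
      apply (rsum_cont D (fun m => dmu s1 s2 alpha beta q m)).
      intros j Hj. destruct (Hk j Hj) as [Ha [Hb Hq]]. apply dmu_cont; auto.
Qed.

Lemma rsum_scal n a f : rsum n (fun j => a * f j) = a * rsum n f.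
Proof. induction n; simpl; [ring|]. rewrite IHn; ring. Qed.

Lemma dmu_facts s1 s2 alpha beta q mu k :
  0 < s1 -> 0 < s2 -> 0 < alpha k -> 0 < beta k -> 0 < q k -> 0 <= mu ->
  let A := alpha k / s1 * q k in let B := beta k / s2 in
  let u := B * dmu s1 s2 alpha beta q mu k in let Y := A * B * mu / ln 2 in
  0 < A /\ 0 < B /\ 0 <= u /\ (0 < u -> (1+u)*(1+A+u) = Y) /\ (u = 0 -> Y <= 1+A) /\
  u * u <= Y /\ (2*(A+1)*(A+2) <= Y -> 1 + A <= u).
Proof.
  intros H1 H2 Ha Hb Hq Hmu A B u Y. pose proof ln2_pos.
  assert (HA : 0 < A) by (unfold A; apply Rmult_lt_0_compat; [apply Rdiv_lt_0_compat|]; lra).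
  assert (HB : 0 < B) by (unfold B; apply Rdiv_lt_0_compat; lra).
  assert (HY : 0 <= Y) by (unfold Y; apply Rdiv_le_0_compat; [|lra]; apply Rmult_le_pos; [|lra]; nra).
  assert (Hu : u = pos_part (sqrt (A^2+4*Y) - A - 2)/2) by (unfold u, A, B, Y; apply dmu_link; auto).
  destruct (core A Y HA HY) as [c0 [c1 c2]]. destruct (core2 A Y HA HY) as [c3 c4].
  rewrite <- Hu in c0, c1, c2, c3, c4. auto 10.
Qed.

Lemma term_hu s1 s2 alpha beta q d k :
  term s1 s2 alpha beta q d k = hu (alpha k / s1 * q k) (beta k / s2 * d k).
Proof. reflexivity. Qed.

Lemma existence D s1 s2 c alpha beta q :
  (1 <= D)%nat -> 0 < s1 -> 0 < s2 -> 0 < c ->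
  (forall k, (k < D)%nat -> 0 < alpha k /\ 0 < beta k /\ 0 < q k) ->
  exists mu, 0 < mu /\ ltil D s1 s2 c alpha beta q mu = 0.
Proof.
  intros HD H1 H2 Hc Hk. pose proof ln2_pos.
  set (A := fun k => alpha k / s1 * q k). set (B := fun k => beta k / s2).
  set (d := dmu s1 s2 alpha beta q).
  assert (Hf : forall mu k, (k < D)%nat -> 0 <= mu ->
     0 < A k /\ 0 < B k /\ 0 <= B k * d mu k /\ (0 < B k * d mu k -> (1+B k * d mu k)*(1+A k+B k * d mu k) = A k * B k * mu / ln 2) /\
     (B k * d mu k = 0 -> A k * B k * mu / ln 2 <= 1+A k) /\
     (B k * d mu k) * (B k * d mu k) <= A k * B k * mu / ln 2 /\
     (2*(A k+1)*(A k+2) <= A k * B k * mu / ln 2 -> 1 + A k <= B k * d mu k)).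
  { intros mu k Hkd Hmu. destruct (Hk k Hkd) as [Ha [Hb Hq]].
    exact (dmu_facts s1 s2 alpha beta q mu k H1 H2 Ha Hb Hq Hmu). }
  assert (Hdn : forall mu k, (k < D)%nat -> 0 <= d mu k).
  { intros. destruct (Hk k H0) as [Ha [Hb Hq]]. apply dmu_nonneg; auto. }
  assert (Hterm : forall mu k, (k < D)%nat -> 0 <= mu ->
     0 <= term s1 s2 alpha beta q (d mu) k <= log2 (1 + A k)).
  { intros mu k Hkd Hmu. rewrite term_hu. destruct (Hf mu k Hkd Hmu) as [a1 [a2 [a3 _]]].
    apply hu_bounds; auto. }
  set (L := rsum D (fun k => log2 (1 + A k))).
  assert (HL : 0 <= L).
  { apply rsum_nonneg. intros j Hj. destruct (Hf 0 j Hj (Rle_refl _)) as [a1 _].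
    left; apply log2_pos; lra. }
  set (m0 := c / (L/2+1)).
  assert (Hm0 : 0 < m0) by (apply Rdiv_lt_0_compat; lra).
  assert (Hpos : 0 < ltil D s1 s2 c alpha beta q m0).
  { unfold ltil. fold d.
    assert (T1 : rsum D (term s1 s2 alpha beta q (d m0)) <= L).
    { apply rsum_le. intros j Hj. destruct (Hterm m0 j Hj ltac:(lra)); auto. }
    assert (T2 : 0 <= rsum D (d m0)) by (apply rsum_nonneg; auto).
    replace (1 / m0) with ((L/2+1)/c) by (unfold m0; field; lra).
    assert (0 <= (L/2+1)/c * (1/2 * rsum D (d m0))).
    { apply Rmult_le_pos; [apply Rdiv_le_0_compat|]; lra. }
    replace ((L / 2 + 1) / c * (c + 1 / 2 * rsum D (d m0))) with
      (L/2+1 + (L / 2 + 1) / c * (1 / 2 * rsum D (d m0))) by (field; lra).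
    lra. }
  set (rho := fun k => A k / (B k * ln 2)).
  set (K := rsum D (fun k => (rho k + 1) / 2)).
  assert (HK : 0 <= K).
  { apply rsum_nonneg. intros j Hj. destruct (Hf 0 j Hj (Rle_refl _)) as [a1 [a2 _]].
    unfold rho. assert (0 < A j / (B j * ln 2)) by (apply Rdiv_lt_0_compat; nra). lra. }
  destruct (Hf 0 O ltac:(lia) (Rle_refl _)) as [HA0 [HB0 _]].
  set (t0 := log2 (1 + A O / 2)).
  assert (Ht0 : 0 < t0) by (apply log2_pos; lra).
  set (B0 := 2 * (A O + 1) * (A O + 2) * ln 2 / (A O * B O)).
  assert (HB0' : 0 < B0) by (unfold B0; apply Rdiv_lt_0_compat; nra).
  set (M := 1 + (2*c+K)/t0 + B0 + m0).
  assert (HM1 : (2*c+K)/t0 < M) by (unfold M; lra).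
  assert (HM2 : B0 <= M) by (assert (0 <= (2*c+K)/t0) by (apply Rdiv_le_0_compat; lra); unfold M; lra).
  assert (HM3 : 1 <= M) by (assert (0 <= (2*c+K)/t0) by (apply Rdiv_le_0_compat; lra); unfold M; lra).
  assert (HM4 : m0 < M) by (assert (0 <= (2*c+K)/t0) by (apply Rdiv_le_0_compat; lra); unfold M; lra).
  set (mu1 := M * M).
  assert (Hmu1 : 0 <= mu1) by (unfold mu1; nra).
  assert (Hdb : forall k, (k < D)%nat -> d mu1 k <= M * ((rho k + 1) / 2)).
  { intros k Hkd. destruct (Hf mu1 k Hkd Hmu1) as [a1 [a2 [a3 [_ [_ [a6 _]]]]]].
    assert (Hr : 0 <= rho k) by (unfold rho; left; apply Rdiv_lt_0_compat; nra).
    assert (Hdd : d mu1 k * d mu1 k <= rho k * (M * M)).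
    { apply Rmult_le_reg_l with (B k * B k); [nra|].
      replace (B k * B k * (rho k * (M * M))) with (A k * B k * mu1 / ln 2)
        by (unfold rho, mu1; field; lra). nra. }
    pose proof (Hdn mu1 k Hkd).
    assert (rho k * (M * M) <= (M * ((rho k + 1) / 2)) * (M * ((rho k + 1) / 2))).
    { assert (0 <= M * M * ((rho k - 1) * (rho k - 1))) by (apply Rmult_le_pos; [apply Rmult_le_pos; lra | apply (Rle_0_sqr (rho k - 1))]).
      assert (E: (M * ((rho k + 1) / 2)) * (M * ((rho k + 1) / 2)) - rho k * (M * M) = M * M * ((rho k - 1) * (rho k - 1)) / 4) by field. lra. }
    destruct (Rle_lt_dec (d mu1 k) (M * ((rho k + 1) / 2))) as [|Hc']; auto.
    assert (0 <= M * ((rho k + 1) / 2)) by nra.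
    assert ((M * ((rho k + 1) / 2)) * (M * ((rho k + 1) / 2)) < d mu1 k * d mu1 k).
    { apply Rmult_le_0_lt_compat; lra. }
    lra. }
  assert (HS : rsum D (d mu1) <= M * K).
  { unfold K. rewrite <- rsum_scal. apply rsum_le; auto. }
  assert (HT : t0 <= rsum D (term s1 s2 alpha beta q (d mu1))).
  { apply Rle_trans with (term s1 s2 alpha beta q (d mu1) O).
    - rewrite term_hu. apply hu_big; auto.
      destruct (Hf mu1 O ltac:(lia) Hmu1) as [_ [_ [_ [_ [_ [_ a7]]]]]]. apply a7.
      replace (2 * (A 0%nat + 1) * (A 0%nat + 2)) with (A O * B O * B0 / ln 2) by (unfold B0; field; nra).
      unfold Rdiv. apply Rmult_le_compat_r; [left; apply Rinv_0_lt_compat; lra|].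
      apply Rmult_le_compat_l; [nra|]. unfold mu1; nra.
    - apply rsum_ge_first; auto. intros; apply Hterm; auto. }
  assert (Hneg : ltil D s1 s2 c alpha beta q mu1 < 0).
  { unfold ltil. fold d.
    assert (HMM : 0 < M * M) by nra.
    assert (0 <= rsum D (d mu1)) by (apply rsum_nonneg; auto).
    assert (Hq : (c + 1/2 * rsum D (d mu1)) < t0 / 2 * (M * M)).
    { assert (t0 * M > 2*c + K).
      { apply Rmult_lt_reg_r with (/t0). apply Rinv_0_lt_compat; lra.
        replace (t0 * M * / t0) with M by (field; lra). exact HM1. }
      nra. }
    assert (1 / mu1 * (c + 1 / 2 * rsum D (d mu1)) < t0 / 2).
    { assert (Hm1 : 0 < mu1) by (unfold mu1; lra). apply Rmult_lt_reg_l with mu1; auto.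
      replace (mu1 * (1 / mu1 * (c + 1 / 2 * rsum D (d mu1)))) with (c + 1 / 2 * rsum D (d mu1)) by (field; lra).
      unfold mu1 at 2. rewrite (Rmult_comm (M*M)). exact Hq. }
    lra. }
  assert (Hlt : m0 < mu1) by (unfold mu1; nra).
  destruct (IVT_interv (fun mu => - ltil D s1 s2 c alpha beta q mu) m0 mu1) as [z [Hz1 Hz2]]; auto; try lra.
  - intros a Ha. apply continuity_pt_filterlim.
    apply (continuous_comp (ltil D s1 s2 c alpha beta q) Ropp).
    + apply ltil_cont; auto. lra.
    + apply exd_cont. auto_derive. auto.
  - exists z. split; lra.
Qed.

Definition hd (A B x : R) := A * B / (ln 2 * ((1 + B * x) * (1 + A + B * x))).

Lemma hk_deriv A B x : 0 < A -> 0 < B -> 0 <= x ->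
  derivable_pt_lim (fun y => log2 (((1 + A) * (1 + B * y)) / (1 + A + B * y))) x (hd A B x).
Proof.
  intros HA HB Hx. apply is_derive_Reals. unfold log2, hd.
  assert (0 < B * x + 1) by nra. assert (0 < 1 + A + B*x) by nra.
  pose proof ln2_pos.
  auto_derive.
  - repeat split; try lra. apply Rdiv_lt_0_compat; nra.
  - field. repeat split; lra.
Qed.

Lemma lag_struct (R1 R2 R3 : R -> R) x l1 l2 l3 a nu e c l :
  derivable_pt_lim R1 x l1 -> derivable_pt_lim R2 x l2 -> derivable_pt_lim R3 x l3 ->
  a*l1 + nu*(-(a*l2)) + l3 = l ->
  derivable_pt_lim (fun y => a * R1 y + nu * (e * c - a * R2 y) + R3 y) x l.
Proof.
  intros H1 H2 H3 E. rewrite <- E. rewrite <- is_derive_Reals in *.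
  apply (is_derive_plus (fun y => a * R1 y + nu * (e * c - a * R2 y)) R3); auto.
  apply (is_derive_plus (fun y => a * R1 y) (fun y => nu * (e * c - a * R2 y))).
  - apply (is_derive_scal R1); auto.
  - apply (is_derive_scal (fun y => e * c - a * R2 y)).
    replace (-(a*l2)) with (minus 0 (a * l2)) by (unfold minus, plus, opp, zero; simpl; ring).
    apply (is_derive_minus (fun _ => e * c) (fun y => a * R2 y)).
    + apply is_derive_Reals. apply derivable_pt_lim_const.
    + apply (is_derive_scal R2); auto.
Qed.

Lemma kkt D s1 s2 c alpha beta q :
  (1 <= D)%nat -> 0 < s1 -> 0 < s2 -> 0 < c ->
  (forall k, (k < D)%nat -> 0 < alpha k /\ 0 < beta k /\ 0 < q k) ->
  (forall mu, 0 < mu -> ltil D s1 s2 c alpha beta q mu = 0 ->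
     let d := dmu s1 s2 alpha beta q mu in
     let eps := rsum D d / (2 * c + rsum D d) in
     let nu := / mu in
     ((forall k, (k < D)%nat -> 0 <= d k) /\ 0 <= eps <= 1 /\
      0 <= gtil D c eps d) /\
     gtil D c eps d = 0 /\
     exists lam : nat -> R,
       (forall k, (k < D)%nat -> 0 <= lam k /\ lam k * d k = 0) /\
       0 <= nu /\ nu * gtil D c eps d = 0 /\
       derivable_pt_lim (fun e => lagr D s1 s2 c alpha beta q nu lam e d) eps 0 /\
       (forall k, (k < D)%nat ->
          derivable_pt_lim (fun x => lagr D s1 s2 c alpha beta q nu lam eps (upd d k x))
            (d k) 0)).
Proof.
  intros HD H1 H2 Hc Hk mu Hmu Hl d eps nu. pose proof ln2_pos.
  assert (Hdn : forall k, (k < D)%nat -> 0 <= d k).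
  { intros k Hkd. destruct (Hk k Hkd) as [Ha [Hb Hq]]. apply dmu_nonneg; auto. }
  assert (HS : 0 <= rsum D d) by (apply rsum_nonneg; auto).
  assert (He : 0 <= eps < 1).
  { unfold eps. split. apply Rdiv_le_0_compat; lra.
    apply Rmult_lt_reg_r with (2*c + rsum D d); [lra|].
    replace (rsum D d / (2 * c + rsum D d) * (2 * c + rsum D d)) with (rsum D d) by (field; lra). lra. }
  assert (Hg : gtil D c eps d = 0).
  { unfold gtil, eps. field. lra. }
  split; [split; [auto|split; lra]|]. split; [auto|].
  set (lam := fun k => (1 - eps) / 2 * (nu - hd (alpha k / s1 * q k) (beta k / s2) (d k))).
  exists lam. split; [|split; [|split; [|split]]].
  - intros k Hkd. destruct (Hk k Hkd) as [Ha [Hb Hq]].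
    destruct (dmu_facts s1 s2 alpha beta q mu k H1 H2 Ha Hb Hq ltac:(lra))
      as [a1 [a2 [a3 [a4 [a5 _]]]]].
    fold d in a3, a4, a5.
    set (A := alpha k / s1 * q k) in *. set (B := beta k / s2) in *.
    destruct (Rle_lt_or_eq_dec 0 (B * d k) a3) as [Hp|Hz].
    + assert (Hlam : lam k = 0).
      { unfold lam, hd. fold A B. rewrite (a4 Hp). unfold nu. field. repeat split; nra. }
      rewrite Hlam. lra.
    + assert (Hd0 : d k = 0).
      { assert (B * d k = 0) by auto. destruct (Rmult_integral _ _ H0); lra. }
      specialize (a5 (eq_sym Hz)). split.
      * unfold lam, hd. fold A B. rewrite Hd0. apply Rmult_le_pos; [lra|].
        replace (B * 0) with 0 by ring.
        assert (A * B / (ln 2 * ((1 + 0) * (1 + A + 0))) <= nu).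
        { unfold nu. apply Rcomplements.Rle_div_l. nra.
          apply Rmult_le_reg_l with mu; auto.
          replace (mu * (/ mu * (ln 2 * ((1 + 0) * (1 + A + 0))))) with (ln 2 * (1 + A)) by (field; lra).
          apply Rmult_le_reg_r with (/ ln 2). apply Rinv_0_lt_compat; lra.
          replace (ln 2 * (1 + A) * / ln 2) with (1 + A) by (field; lra).
          replace (mu * (A * B) * / ln 2) with (A * B * mu / ln 2) by (field; lra). lra. }
        lra.
      * rewrite Hd0. ring.
  - unfold nu. left. apply Rinv_0_lt_compat; auto.
  - rewrite Hg. ring.
  - apply is_derive_Reals. unfold lagr, ftil, gtil. auto_derive; auto.
    unfold ltil in Hl. fold d in Hl. rewrite <- Hl. unfold nu. field. lra.
  - intros k Hkd. destruct (Hk k Hkd) as [Ha [Hb Hq]].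
    unfold lagr, ftil, gtil.
    apply (lag_struct (fun x => rsum D (term s1 s2 alpha beta q (upd d k x)))
                      (fun x => rsum D (upd d k x))
                      (fun x => rsum D (fun j => lam j * upd d k x j)) (d k)
                      (rsum D (fun j => if Nat.eqb j k then hd (alpha k / s1 * q k) (beta k / s2) (d k) else 0))
                      (rsum D (fun j => if Nat.eqb j k then 1 else 0))
                      (rsum D (fun j => if Nat.eqb j k then lam k else 0))).
    + apply rsum_deriv. intros j Hj. unfold term, upd.
      destruct (Nat.eqb j k) eqn:E.
      * apply Nat.eqb_eq in E. subst j. apply hk_deriv; auto.
        apply Rmult_lt_0_compat; [apply Rdiv_lt_0_compat|]; lra.
        apply Rdiv_lt_0_compat; lra.
      * apply derivable_pt_lim_const.
    + apply rsum_deriv. intros j Hj. unfold upd.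
      destruct (Nat.eqb j k) eqn:E.
      * apply derivable_pt_lim_id.
      * apply derivable_pt_lim_const.
    + apply rsum_deriv. intros j Hj. unfold upd.
      destruct (Nat.eqb j k) eqn:E.
      * apply Nat.eqb_eq in E. subst j. apply is_derive_Reals. auto_derive; auto. ring.
      * apply derivable_pt_lim_const.
    + rewrite !rsum_delta by auto. unfold lam. ring.
Qed.
Theorem mainTheorem2 (D : nat) (s1 s2 c : R) (alpha beta q : nat -> R) :
  (1 <= D)%nat -> 0 < s1 -> 0 < s2 -> 0 < c ->
  (forall k, (k < D)%nat -> 0 < alpha k /\ 0 < beta k /\ 0 < q k) ->
  (exists mu, 0 < mu /\ ltil D s1 s2 c alpha beta q mu = 0) /\
  (forall mu, 0 < mu -> ltil D s1 s2 c alpha beta q mu = 0 ->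
     let d := dmu s1 s2 alpha beta q mu in
     let eps := rsum D d / (2 * c + rsum D d) in
     let nu := / mu in
     (* primal feasibility *)
     ((forall k, (k < D)%nat -> 0 <= d k) /\ 0 <= eps <= 1 /\
      0 <= gtil D c eps d) /\
     gtil D c eps d = 0 /\
     exists lam : nat -> R,
       (* dual feasibility and complementary slackness *)
       (forall k, (k < D)%nat -> 0 <= lam k /\ lam k * d k = 0) /\
       0 <= nu /\ nu * gtil D c eps d = 0 /\
       (* stationarity of the Lagrangian *)
       derivable_pt_lim (fun e => lagr D s1 s2 c alpha beta q nu lam e d) eps 0 /\
       (forall k, (k < D)%nat ->
          derivable_pt_lim (fun x => lagr D s1 s2 c alpha beta q nu lam eps (upd d k x))
            (d k) 0)).
Proof.
  intros HD H1 H2 Hc Hk. split.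
  - apply existence; auto.
  - apply kkt; auto.
Qed.
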